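(* Assume the setting in the context (deterministic $\Phi$ with $\operatorname{rank}(\widehat\Phi_1)=k$). Then for $i=1,\dots,k$, $$\sin\angle(\mathcal R(Q),\mathcal R(u_i))\le\frac{\delta_i^{2q+2}\|\widehat\Phi_2\widehat\Phi_1^\dagger\|_2}{\sqrt{1+\gamma^{4q+4}\|\widehat\Phi_2\widehat\Phi_1^\dagger\|_2^2}},\qquad \sin\angle(\mathcal R(P),\mathcal R(v_i))\le\frac{\delta_i^{2q+1}\|\widehat\Phi_2\widehat\Phi_1^\dagger\|_2}{\sqrt{1+\gamma^{4q+2}\|\widehat\Phi_2\widehat\Phi_1^\dagger\|_2^2}},$$ where $\angle(\mathcal X,\mathrm{span}\{x\})$ denotes the angle between the unit vector $x$ and the subspace $\mathcal X$, i.e. $\sin\angle=\|(I-\Pi_{\mathcal X})x\|_2$ with $\Pi_{\mathcal X}$ the orthogonal projector onto $\mathcal X$.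
   Context: Let $A\in\mathbb R^{m\times n}$ with $m\ge n$ have full SVD $A=U\Sigma V^T$, with singular values $\sigma_1\ge\sigma_2\ge\dots\ge\sigma_n\ge 0$. Fix an integer $k\ge1$ with $\sigma_k>0$ (the paper regards $A$ as having numerical rank $k$, i.e. $\sigma_k$ well separated from $\sigma_{k+1}$). Write $U=[U_k\ U_\perp]$ with $U_k\in\mathbb R^{m\times k}$ the first $k$ left singular vectors $u_1,\dots,u_k$, $U_\perp\in\mathbb R^{m\times(m-k)}$ the rest; $V=[V_k\ V_\perp]$ with $V_k\in\mathbb R^{n\times k}$ the first $k$ right singular vectors $v_1,\dots,v_k$; $\Sigma_k=\mathrm{diag}(\sigma_1,\dots,\sigma_k)$ and $\Sigma_\perp$ the remaining diagonal block of $\Sigma$ containing $\sigma_{k+1},\dots,\sigma_n$ (so $\|\Sigma_\perp\|_2=\sigma_{k+1}$, $\|\Sigma_\perp\|_F=(\sum_{i>k}\sigma_i^2)^{1/2}$). The notation $\|\cdot\|_{2,F}$ means the statement holds for both the spectral and Frobenius norm. Let $p\ge1$ be an oversampling integer, $d=k+p<n$, and $q\ge0$ an integer (power-iteration parameter). RU-QLP (Randomized Unpivoted QLP): given $\Phi\in\mathbb R^{m\times d}$, let $\bar P\in\mathbb R^{n\times d}$ have orthonormal columns spanning the range of $(A^TA)^qA^T\Phi$ (assumed of rank $d$); compute the thin unpivoted QR factorization $A\bar P=QR$ with $Q\in\mathbb R^{m\times d}$ having orthonormal columns and $R\in\mathbb R^{d\times d}$ upper triangular; compute the thin unpivoted QR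 factorization $R^T=\widetilde P\widetilde R$; set $P=\bar P\widetilde P\in\mathbb R^{n\times d}$ and $L=\widetilde R^T$ (lower triangular), giving $\hat A=QLP^T$. Partition $R=\begin{bmatrix}R_{11}&R_{12}\\0&R_{22}\end{bmatrix}$ and $L=\begin{bmatrix}L_{11}&0\\L_{21}&L_{22}\end{bmatrix}$ with $R_{11},L_{11}\in\mathbb R^{k\times k}$. Define $\widehat\Phi_1=U_k^T\Phi\in\mathbb R^{k\times d}$ and $\widehat\Phi_2=U_\perp^T\Phi\in\mathbb R^{(m-k)\times d}$, assume $\widehat\Phi_1$ has rank $k$, and let $\dagger$ denote the Moore–Penrose inverse. Set $\delta_i=\sigma_{k+1}/\sigma_i$ for $i=1,\dots,k$ and $\gamma=\sigma_n/\sigma_1$. *)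

(* Defs.v *)
From mathcomp Require Import all_boot all_order all_algebra.
From mathcomp Require Import boolp classical_sets reals.
Set Implicit Arguments. Unset Strict Implicit. Unset Printing Implicit Defensive.
Import Order.TTheory GRing.Theory Num.Theory.
Local Open Scope ring_scope.
Local Open Scope classical_set_scope.

Section Defs.
Variable R : realType.

Definition vnorm2 {n : nat} (x : 'cV[R]_n) : R :=
  Num.sqrt (\sum_(i < n) x i 0 ^+ 2).

Definition snorm2 {m n : nat} (A : 'M[R]_(m, n)) : R :=
  sup [set vnorm2 (A *m x) | x in [set x : 'cV[R]_n | vnorm2 x <= 1]].

Definition is_pinv {m n : nat} (A : 'M[R]_(m, n)) (X : 'M[R]_(n, m)) : Prop :=
  [/\ A *m X *m A = A, X *m A *m X = X,
      (A *m X)^T = A *m X & (X *m A)^T = X *m A].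

(* Pi is the orthogonal projector onto the column space R(X) *)
Definition is_orth_proj {m d : nat} (X : 'M[R]_(m, d)) (Pi : 'M[R]_m) : Prop :=
  [/\ Pi^T = Pi, Pi *m Pi = Pi & (Pi^T == X^T)%MS].

(* sin of the angle between the subspace with orthogonal projector Pi and
   span{x}, for a unit vector x: ||(I - Pi) x||_2 *)
Definition sin_angle {m : nat} (Pi : 'M[R]_m) (x : 'cV[R]_m) : R :=
  vnorm2 ((1%:M - Pi) *m x).

Definition diag_rect (m n : nat) (s : nat -> R) : 'M[R]_(m, n) :=
  \matrix_(i < m, j < n) (if (i : nat) == j then s j else 0).

Definition lcols {r m k : nat} (hkm : (k <= m)%N) (U : 'M[R]_(r, m))
  : 'M[R]_(r, k) := lsubmx (castmx (erefl r, esym (subnKC hkm)) U).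
Definition rcols {r m k : nat} (hkm : (k <= m)%N) (U : 'M[R]_(r, m))
  : 'M[R]_(r, m - k) := rsubmx (castmx (erefl r, esym (subnKC hkm)) U).

Definition upper_tri {d : nat} (M : 'M[R]_d) : Prop :=
  forall i j : 'I_d, (j < i)%N -> M i j = 0.

End Defs.

(* Main.v *)
Require Import Defs.
From mathcomp Require Import all_boot all_order all_algebra.
From mathcomp Require Import boolp classical_sets reals.
From mathcomp Require Import ring lra.
Import Order.TTheory GRing.Theory Num.Theory.
Local Open Scope ring_scope.
Set Implicit Arguments. Unset Strict Implicit.

Section H.
Variable R : realType.

Definition dot {n} (x y : 'cV[R]_n) : R := (x^T *m y) 0 0.

Lemma dotE n (x y : 'cV[R]_n) : dot x y = \sum_j x j 0 * y j 0.
Proof. by rewrite /dot mxE; apply: eq_bigr => j _; rewrite mxE. Qed.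

Lemma dotC n (x y : 'cV[R]_n) : dot x y = dot y x.
Proof. by rewrite !dotE; apply: eq_bigr => j _; rewrite mulrC. Qed.

Lemma dot_ge0 n (x : 'cV[R]_n) : 0 <= dot x x.
Proof. by rewrite dotE; apply: sumr_ge0 => j _; rewrite -expr2 sqr_ge0. Qed.

Lemma vnorm2E n (x : 'cV[R]_n) : vnorm2 x = Num.sqrt (dot x x).
Proof. by rewrite /vnorm2 dotE; congr Num.sqrt; apply: eq_bigr => j _; rewrite expr2. Qed.

Lemma dot_mulmx n p (M : 'M[R]_(n, p)) x y : dot (M *m x) y = dot x (M^T *m y).
Proof. by rewrite /dot trmx_mul mulmxA. Qed.

Lemma dotDl n (x y z : 'cV[R]_n) : dot (x + y) z = dot x z + dot y z.
Proof. by rewrite !dotE -big_split; apply: eq_bigr => j _; rewrite mxE mulrDl. Qed.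
Lemma dotBl n (x y z : 'cV[R]_n) : dot (x - y) z = dot x z - dot y z.
Proof. by rewrite !dotE -sumrB; apply: eq_bigr => j _; rewrite !mxE mulrBl. Qed.
Lemma dotZl n a (x z : 'cV[R]_n) : dot (a *: x) z = a * dot x z.
Proof. by rewrite !dotE mulr_sumr; apply: eq_bigr => j _; rewrite mxE mulrA. Qed.
Lemma dotDr n (x y z : 'cV[R]_n) : dot z (x + y) = dot z x + dot z y.
Proof. by rewrite dotC dotDl !(dotC z). Qed.
Lemma dotBr n (x y z : 'cV[R]_n) : dot z (x - y) = dot z x - dot z y.
Proof. by rewrite dotC dotBl !(dotC z). Qed.
Lemma dotZr n a (x z : 'cV[R]_n) : dot z (a *: x) = a * dot z x.
Proof. by rewrite dotC dotZl dotC. Qed.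

Lemma angle_core m (Pi : 'M[R]_m) (u z : 'cV[R]_m) :
  Pi^T = Pi -> Pi *m Pi = Pi -> dot u u = 1 -> dot u z = 0 ->
  Pi *m (u + z) = u + z ->
  dot ((1%:M - Pi) *m u) ((1%:M - Pi) *m u) <= dot z z / (1 + dot z z).
Proof.
move=> hT hI huu huz hw.
set t := dot z z.
have t0 : 0 <= t by apply: dot_ge0.
set c := (1 + t)^-1.
set v := (1 - c) *: u - c *: z.
have hv : (1%:M - Pi) *m u = (1%:M - Pi) *m v.
  apply/eqP; rewrite -subr_eq0 -mulmxBr /v.
  have -> : u - ((1 - c) *: u - c *: z) = c *: (u + z).
    by apply/matrixP => a b; rewrite !mxE; ring.
  by rewrite -scalemxAr mulmxBl mul1mx hw subrr scaler0.
have hP : (1%:M - Pi)^T *m (1%:M - Pi) = 1%:M - Pi.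
  have -> : (1%:M - Pi)^T = 1%:M - Pi.
    apply/matrixP => a b; have := congr1 (fun M : 'M[R]_m => M a b) hT; rewrite !mxE => ->.
    by rewrite eq_sym.
  by rewrite mulmxBl !mulmxBr !mul1mx mulmx1 hI subrr subr0.
rewrite hv dot_mulmx mulmxA hP mulmxBl mul1mx dotBr.
have hPv : 0 <= dot v (Pi *m v).
  by rewrite -hI -{1}hT -mulmxA -dot_mulmx; apply: dot_ge0.
have hvv : dot v v = (1 - c) ^+ 2 + c ^+ 2 * t.
  rewrite /v !(dotBl, dotBr, dotZl, dotZr) huu (dotC z u) huz -/t.
  by ring.
have -> : dot z z / (1 + dot z z) = (1 - c) ^+ 2 + c ^+ 2 * t.
  rewrite -/t /c; clear -t0; field.
  by rewrite gt_eqF //; apply: ltr_pwDl.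
by rewrite hvv; move: hPv; clear; lra.
Qed.


Lemma lcolsE r m k (hkm : (k <= m)%N) (U : 'M[R]_(r, m)) a b :
  lcols hkm U a b = U a (widen_ord hkm b).
Proof. by rewrite /lcols mxE castmxE /=; congr (U _ _); apply: val_inj. Qed.

Lemma rcolsE r m k (hkm : (k <= m)%N) (U : 'M[R]_(r, m)) a (b : 'I_(m - k)) :
  rcols hkm U a b = U a (cast_ord (subnKC hkm) (rshift k b)).
Proof. by rewrite /rcols mxE castmxE /=; congr (U _ _); apply: val_inj. Qed.

Lemma diag_ext a b f g : (forall j, (j < a)%N -> (j < b)%N -> f j = g j) ->
  @diag_rect R a b f = @diag_rect R a b g.
Proof.
move=> h; apply/matrixP => i j; rewrite !mxE.
by case: eqP => // e; rewrite h // -e.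
Qed.

Lemma diag_tr a b f : (@diag_rect R a b f)^T = @diag_rect R b a f.
Proof.
apply/matrixP => i j; rewrite !mxE eq_sym.
by case: eqP => // e; rewrite e.
Qed.

Lemma diag_mul a b c f g :
  @diag_rect R a b f *m @diag_rect R b c g =
  @diag_rect R a c (fun j => if (j < b)%N then f j * g j else 0).
Proof.
apply/matrixP => i j; rewrite !mxE.
case: (ltnP i b) => hib.
  rewrite (bigD1 (Ordinal hib)) //= big1 => [|l hl]; last first.
    rewrite !mxE; case: eqP => [e|]; last by rewrite mul0r.
    by move: hl; rewrite -val_eqE /= -e eqxx.
  rewrite !mxE eqxx addr0; case: eqP => [e|]; last by rewrite mulr0.
  by rewrite -e hib e.
rewrite big1 => [|l _]; last first.
  rewrite !mxE; case: eqP => [e|]; last by rewrite mul0r.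
  by move: (ltn_ord l); rewrite -e ltnNge hib.
by case: eqP => // e; rewrite -e ltnNge hib.
Qed.

Lemma diag_one a : @diag_rect R a a (fun _ => 1) = 1%:M.
Proof. by apply/matrixP => i j; rewrite !mxE -val_eqE; case: eqP. Qed.

Lemma diag_mulv a b (h : (a <= b)%N) f (y : 'cV[R]_b) (j : 'I_a) :
  (@diag_rect R a b f *m y) j 0 = f j * y (widen_ord h j) 0.
Proof.
rewrite mxE (bigD1 (widen_ord h j)) //= big1 => [|l hl].
  by rewrite !mxE eqxx addr0.
rewrite !mxE; case: eqP => [e|]; last by rewrite mul0r.
by move: hl; rewrite -val_eqE /= -e eqxx.
Qed.

Lemma proj_fix m d p (X : 'M[R]_(m, d)) (Pi : 'M[R]_m) (Y : 'M[R]_(m, p)) :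
  is_orth_proj X Pi -> (Y^T <= X^T)%MS -> Pi *m Y = Y.
Proof.
case=> hT hI /andP [_ hX] hY.
have /submxP [D hD] := submx_trans hY hX.
have -> : Y = Pi *m D^T by rewrite -[Y]trmxK hD trmx_mul trmxK.
by rewrite mulmxA hI.
Qed.

Lemma sum_cast m m' (e : m' = m) (P : pred 'I_m) (F : 'I_m -> R) :
  \sum_(j < m | P j) F j = \sum_(j < m' | P (cast_ord e j)) F (cast_ord e j).
Proof. by subst m; apply: eq_big => j; rewrite cast_ord_id. Qed.

Lemma lcolsT_mul r m k (hkm : (k <= m)%N) (U : 'M[R]_(m, m)) (X : 'M[R]_(m, r)) b c :
  ((lcols hkm U)^T *m X) b c = (U^T *m X) (widen_ord hkm b) c.
Proof. rewrite !mxE; apply: eq_bigr => a _; rewrite !(mxE, castmxE) /=. congr (U _ _ * _); exact: val_inj. Qed.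

Lemma rcolsT_mul r m k (hkm : (k <= m)%N) (U : 'M[R]_(m, m)) (X : 'M[R]_(m, r)) b c :
  ((rcols hkm U)^T *m X) b c = (U^T *m X) (cast_ord (subnKC hkm) (rshift k b)) c.
Proof. rewrite !mxE; apply: eq_bigr => a _; rewrite !(mxE, castmxE) /=. congr (U _ _ * _); exact: val_inj. Qed.

Lemma rcols_dot m k (hkm : (k <= m)%N) (U : 'M[R]_(m, m)) (x : 'cV[R]_m) :
  dot ((rcols hkm U)^T *m x) ((rcols hkm U)^T *m x) =
  \sum_(j < m | (k <= j)%N) ((U^T *m x) j 0) ^+ 2.
Proof.
rewrite dotE (sum_cast (subnKC hkm)) big_split_ord /=.
rewrite [X in X + _]big_pred0 => [|j]; last first.
  by rewrite leqNgt ltn_ord.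
rewrite add0r; apply: eq_big => [j|j _]; first by rewrite /= leq_addr.
by rewrite rcolsT_mul expr2.
Qed.

Lemma dot_le1 n (x : 'cV[R]_n) : vnorm2 x <= 1 -> dot x x <= 1.
Proof.
rewrite vnorm2E => h.
have h0 := sqrtr_ge0 (dot x x).
rewrite -(sqr_sqrtr (dot_ge0 x)); move: h h0; set r := Num.sqrt _; clear; nra.
Qed.

Lemma coord_le n (x : 'cV[R]_n) j : x j 0 * x j 0 <= dot x x.
Proof.
by rewrite dotE (bigD1 j) //= lerDl; apply: sumr_ge0 => l _; rewrite -expr2 sqr_ge0.
Qed.

Lemma snorm_ub a b (M : 'M[R]_(a, b)) :
  has_ubound [set vnorm2 (M *m x) | x in [set x : 'cV[R]_b | vnorm2 x <= 1]].
Proof.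
exists (Num.sqrt (\sum_(i < a) (\sum_(l < b) `|M i l|) ^+ 2)).
move=> _ [x /= hx <-]; rewrite vnorm2E ler_sqrt; last first.
  by apply: sumr_ge0 => i _; rewrite sqr_ge0.
rewrite dotE; apply: ler_sum => i _.
have hxl : forall l, `|x l 0| <= 1.
  move=> l; have h1 := coord_le x l; have h2 := dot_le1 hx.
  have h3 : `|x l 0| * `|x l 0| <= 1.
    rewrite -normrM ger0_norm; first exact: le_trans h1 h2.
    by rewrite -expr2 sqr_ge0.
  have := normr_ge0 (x l 0); move: h3; clear; nra.
have hv : `|(M *m x) i 0| <= \sum_(l < b) `|M i l|.
  rewrite mxE; apply: le_trans (ler_norm_sum _ _ _) _.
  apply: ler_sum => l _; rewrite normrM.
  have := hxl l; have := normr_ge0 (M i l); have := normr_ge0 (x l 0); clear; nra.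
rewrite -expr2 -(real_normK (num_real _)) expr2; have := normr_ge0 ((M *m x) i 0); move: hv; clear; nra.
Qed.

Lemma snorm_le a b (M : 'M[R]_(a, b)) x : vnorm2 x <= 1 -> vnorm2 (M *m x) <= snorm2 M.
Proof. by move=> hx; apply: ub_le_sup (snorm_ub M) _ _; exists x. Qed.

Lemma vnorm2_ge0 n (x : 'cV[R]_n) : 0 <= vnorm2 x.
Proof. by rewrite vnorm2E sqrtr_ge0. Qed.

Lemma snorm_ge0 a b (M : 'M[R]_(a, b)) : 0 <= snorm2 M.
Proof.
apply: le_trans (snorm_le M (x := 0) _); first exact: vnorm2_ge0.
by rewrite vnorm2E dotE big1 ?sqrtr0 // => j _; rewrite mxE mul0r.
Qed.

Lemma final_ineq (S t b G : R) : 0 <= S -> 0 <= t -> 0 <= b -> 0 <= G -> G <= b ^+ 2 ->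
  t <= b ^+ 2 -> S <= t / (1 + t) -> Num.sqrt S <= b / Num.sqrt (1 + G).
Proof.
move=> S0 t0 b0 G0 Gb tb hS.
have hG : 0 < 1 + G by apply: ltr_pwDl.
have hsG : 0 < Num.sqrt (1 + G) by rewrite sqrtr_gt0.
have h1 : S <= b ^+ 2 / (1 + G).
  apply: le_trans hS _; rewrite ler_pdivrMr; last by apply: ltr_pwDl.
  rewrite mulrAC ler_pdivlMr //.
  have : t * G <= t * b ^+ 2 by apply: ler_wpM2l.
  move: tb; clear -t0; nra.
have h2 : b ^+ 2 / (1 + G) = (b / Num.sqrt (1 + G)) ^+ 2.
  by rewrite expr_div_n sqr_sqrtr // ltW.
have hr : 0 <= b / Num.sqrt (1 + G) by rewrite divr_ge0 // ltW.
have hs : 0 <= Num.sqrt S by apply: sqrtr_ge0.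
have hSS : Num.sqrt S ^+ 2 = S by rewrite sqr_sqrtr.
move: h1; rewrite h2 -{1}hSS; move: hr hs; set x := Num.sqrt S; set y := _ / _.
clear; nra.
Qed.

Lemma part (mm kk : nat) (W : 'M[R]_mm) (Pi : 'M[R]_mm) (i0 : 'I_mm) (d : 'cV[R]_mm)
  (a b G : R) :
  W^T *m W = 1%:M -> Pi^T = Pi -> Pi *m Pi = Pi -> (i0 < kk)%N -> 0 < a ->
  Pi *m (W *m d) = W *m d -> d i0 0 = a ->
  (forall j : 'I_mm, j != i0 -> (j < kk)%N -> d j 0 = 0) ->
  0 <= b -> 0 <= G -> G <= b ^+ 2 ->
  \sum_(j < mm | (kk <= j)%N) d j 0 ^+ 2 <= (a * b) ^+ 2 ->
  vnorm2 ((1%:M - Pi) *m col i0 W) <= b / Num.sqrt (1 + G).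
Proof.
move=> hW hT hI hik a0 hfix hdi hdl b0 G0 Gb hsum.
set e : 'cV[R]_mm := delta_mx i0 0.
set y' := a^-1 *: d - e.
have ha : a != 0 by rewrite gt_eqF.
have hey : e + y' = a^-1 *: d by rewrite /y' addrC subrK.
have he j : e j 0 = (j == i0)%:R by rewrite mxE eqxx andbT.
have hy j : y' j 0 = a^-1 * d j 0 - (j == i0)%:R by rewrite !mxE eqxx andbT.
have hWd x y : dot (W *m x) (W *m y) = dot x y by rewrite dot_mulmx mulmxA hW mul1mx.
have huu : dot (W *m e) (W *m e) = 1.
  rewrite hWd dotE (bigD1 i0) //= big1 => [|j hj]; first by rewrite he eqxx mulr1 addr0.
  by rewrite he (negbTE hj) mul0r.
have huz : dot (W *m e) (W *m y') = 0.
  rewrite hWd dotE big1 // => j _; rewrite he hy.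
  case: eqP => [->|]; last by rewrite mul0r.
  by rewrite hdi mulVf // subrr mulr0.
have hw : Pi *m (W *m e + W *m y') = W *m e + W *m y'.
  by rewrite -mulmxDr hey -!scalemxAr hfix.
have hc := angle_core hT hI huu huz hw.
set t := dot (W *m y') (W *m y') in hc.
have t0 : 0 <= t by apply: dot_ge0.
have ht : t <= b ^+ 2.
  rewrite /t hWd dotE (bigID (fun j : 'I_mm => (kk <= j)%N)) /= [X in _ + X]big1 => [|j hj]; last first.
    rewrite hy; case: (eqVneq j i0) => [->|hne].
      by rewrite hdi mulVf // subrr mulr0.
    by rewrite hdl ?mulr0 ?subrr ?mul0r // ltnNge.
  rewrite addr0.
  have -> : b ^+ 2 = a^-1 ^+ 2 * (a * b) ^+ 2.
    by rewrite exprMn mulrA -exprMn mulVf // expr1n mul1r.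
  have hsq : \sum_(j < mm | (kk <= j)%N) y' j 0 * y' j 0 =
             a^-1 ^+ 2 * \sum_(j < mm | (kk <= j)%N) d j 0 ^+ 2.
    rewrite mulr_sumr; apply: eq_bigr => j hj; rewrite hy.
    have -> : (j == i0) = false.
      by apply/negbTE; apply/eqP => e1; move: hj; rewrite e1 leqNgt hik.
    by rewrite /= ?subr0; ring.
  rewrite hsq; apply: ler_wpM2l => //; exact: sqr_ge0.
rewrite colE vnorm2E; apply: (final_ineq (t := t)) => //; exact: dot_ge0.
Qed.

Lemma pow_le (x y : R) e : 0 <= x -> x <= y -> x ^+ e <= y ^+ e.
Proof.
move=> x0 xy; apply: lerXn2r => //; rewrite nnegrE //; exact: le_trans xy.
Qed.

Lemma diag_mulv_sq a f (y : 'cV[R]_a) (j : 'I_a) :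
  (@diag_rect R a a f *m y) j 0 = f j * y j 0.
Proof. by rewrite (diag_mulv (leqnn a)); congr (_ * y _ _); apply: val_inj. Qed.

Lemma pow_conj n (V X : 'M[R]_n) q : V^T *m V = 1%:M ->
  (V *m X *m V^T) ^+ q = V *m X ^+ q *m V^T.
Proof.
move=> hV; have hV' := mulmx1C hV.
elim: q => [|q IH]; first by rewrite !expr0 -idmxE mulmx1 hV'.
rewrite !exprS IH -!mulmxE !mulmxA -(mulmxA (V *m X)) hV mulmx1.
by rewrite -!mulmxA.
Qed.

Lemma diag_pow n f q : (@diag_rect R n n f) ^+ q = @diag_rect R n n (fun j => f j ^+ q).
Proof.
elim: q => [|q IH]; first by rewrite expr0 -idmxE -diag_one; apply: diag_ext => j _ _; rewrite expr0.
rewrite exprS IH -mulmxE diag_mul; apply: diag_ext => j hj _; by rewrite hj exprS.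
Qed.

End H.
Unset Implicit Arguments.
Set Strict Implicit.


Lemma gd_ineq (R : realType) (g d et : R) e : 0 <= g -> g <= d -> 0 <= et ->
  g ^+ (e + e) * et ^+ 2 <= (d ^+ e * et) ^+ 2.
Proof.
move=> g0 gd et0; rewrite exprD exprMn; apply: ler_wpM2r; first exact: sqr_ge0.
have := pow_le e g0 gd; have := exprn_ge0 e g0; clear; nra.
Qed.

Theorem theorem4 (R : realType) (m n k p q : nat)
  (hkm : (k <= m)%N) (hkn : (k <= n)%N)
  (hnm : (n <= m)%N) (hk1 : (1 <= k)%N) (hp1 : (1 <= p)%N) (hdn : (k + p < n)%N)
  (A : 'M[R]_(m, n)) (U : 'M[R]_m) (V : 'M[R]_n) (s : nat -> R)
  (hU : U^T *m U = 1%:M) (hV : V^T *m V = 1%:M)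
  (hs_nonneg : forall j, (j < n)%N -> 0 <= s j)
  (hs_mono : forall j, (j.+1 < n)%N -> s j.+1 <= s j)
  (hsk : 0 < s k.-1)
  (hSVD : A = U *m diag_rect m n s *m V^T)
  (Phi : 'M[R]_(m, k + p))
  (Pbar : 'M[R]_(n, k + p)) (Q : 'M[R]_(m, k + p)) (Rm : 'M[R]_(k + p))
  (Pt : 'M[R]_(k + p)) (Rt : 'M[R]_(k + p))
  (hrank : \rank ((A^T *m A) ^+ q *m A^T *m Phi) = (k + p)%N)
  (hPbar_on : Pbar^T *m Pbar = 1%:M)
  (hPbar_range : (Pbar^T == ((A^T *m A) ^+ q *m A^T *m Phi)^T)%MS)
  (hQR : A *m Pbar = Q *m Rm) (hQ_on : Q^T *m Q = 1%:M) (hR_up : upper_tri Rm)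
  (hQR2 : Rm^T = Pt *m Rt) (hPt_on : Pt^T *m Pt = 1%:M) (hRt_up : upper_tri Rt)
  (Phi1dag : 'M[R]_(k + p, k))
  (hrank1 : \rank ((lcols hkm U)^T *m Phi) = k)
  (hdag : is_pinv ((lcols hkm U)^T *m Phi) Phi1dag)
  (PiQ : 'M[R]_m) (PiP : 'M[R]_n)
  (hPiQ : is_orth_proj Q PiQ) (hPiP : is_orth_proj (Pbar *m Pt) PiP) :
  let eta := snorm2 ((rcols hkm U)^T *m Phi *m Phi1dag) in
  let gamma := s n.-1 / s 0%N in
  forall i : 'I_k,
    let delta := s k / s i in
    sin_angle PiQ (col i (lcols hkm U))
      <= delta ^+ (2 * q + 2) * eta
         / Num.sqrt (1 + gamma ^+ (4 * q + 4) * eta ^+ 2)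
    /\
    sin_angle PiP (col i (lcols hkn V))
      <= delta ^+ (2 * q + 1) * eta
         / Num.sqrt (1 + gamma ^+ (4 * q + 2) * eta ^+ 2).

Proof.
move=> eta gamma i delta.
have hik : (i < k)%N := ltn_ord i.
have hkn' : (k < n)%N by apply: leq_ltn_trans hdn; rewrite leq_addr.
have hmono : forall j l, (j <= l)%N -> (l < n)%N -> s l <= s j.
  move=> j l; elim: l => [|l IH] hjl hl; first by move: hjl; rewrite leqn0 => /eqP ->.
  case: (ltngtP j l.+1) => [hj|hj|->]; last by [].
    by apply: le_trans (hs_mono _ hl) (IH _ (ltnW hl)); rewrite -ltnS.
  by move: hjl; rewrite leqNgt hj.
have hsi : 0 < s i.
  apply: lt_le_trans hsk (hmono _ _ _ _); last by apply: leq_ltn_trans (leq_pred k) hkn'.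
  by rewrite -ltnS prednK.
have hsk0 : 0 <= s k := hs_nonneg _ hkn'.
have hsks : s k <= s i := hmono _ _ (ltnW hik) hkn'.
have eta0 : 0 <= eta := snorm_ge0 _.
have hdel0 : 0 <= delta by rewrite divr_ge0 // ltW.
have hn0 : (0 < n)%N by apply: leq_ltn_trans hkn'.
have hs0 : s i <= s 0 := hmono _ _ (leq0n _) (ltn_trans hik hkn').
have hn1 : (n.-1 < n)%N by rewrite prednK.
have hsn : s n.-1 <= s k by apply: hmono => //; rewrite -ltnS prednK.
have hsn0 : 0 <= s n.-1 := hs_nonneg _ hn1.
have gam0 : 0 <= gamma by rewrite divr_ge0 // (le_trans (ltW hsi) hs0).
have gamd : gamma <= delta.
  rewrite /gamma /delta ler_pdivrMr; last exact: lt_le_trans hsi hs0.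
  rewrite mulrAC ler_pdivlMr //.
  move: hsn hsn0 hsi hs0 hsk0; clear; nra.
set Phi1 := (lcols hkm U)^T *m Phi.
have hP1 : Phi1 *m Phi1dag = 1%:M.
  case: hdag => h1 _ _ _.
  have rf : row_free Phi1 by rewrite /row_free hrank1.
  by apply: (row_free_inj rf); rewrite mul1mx.
pose c0 : 'cV[R]_(k + p) := Phi1dag *m delta_mx i 0.
pose y : 'cV[R]_m := U^T *m (Phi *m c0).
have hy_low : forall j : 'I_m, (j < k)%N -> y j 0 = (j == widen_ord hkm i)%:R.
  move=> j hj.
  have := lcolsT_mul hkm U (Phi *m c0) (Ordinal hj) 0.
  rewrite mulmxA -/Phi1 /c0 mulmxA hP1 mul1mx mxE eqxx andbT.
  have -> : widen_ord hkm (Ordinal hj) = j by apply: val_inj.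
  by move=> <-; congr (_%:R); rewrite -!val_eqE.
have hdel1 : vnorm2 (delta_mx i 0 : 'cV[R]_k) <= 1.
  rewrite vnorm2E dotE (bigD1 i) //= big1 => [|j hj]; last by rewrite mxE (negbTE hj) mul0r.
  by rewrite mxE eqxx mulr1 addr0 sqrtr1.
have hy_sum : \sum_(j < m | (k <= j)%N) y j 0 ^+ 2 <= eta ^+ 2.
  rewrite -rcols_dot.
  set v := (rcols hkm U)^T *m (Phi *m c0).
  have hv : vnorm2 v <= eta.
    have -> : v = ((rcols hkm U)^T *m Phi *m Phi1dag) *m delta_mx i 0 by rewrite /v /c0 !mulmxA.
    exact: snorm_le.
  have -> : dot v v = vnorm2 v ^+ 2 by rewrite vnorm2E sqr_sqrtr // dot_ge0.
  have := vnorm2_ge0 v; move: hv eta0; set r := vnorm2 v; clear; nra.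
have hAt : A^T = V *m diag_rect n m s *m U^T.
  by rewrite hSVD !trmx_mul trmxK diag_tr mulmxA.
have hAtA : A^T *m A = V *m diag_rect n n (fun j => s j ^+ 2) *m V^T.
  rewrite hAt hSVD !mulmxA -(mulmxA (V *m _) U^T U) hU mulmx1 -(mulmxA V) diag_mul.
  by congr (_ *m _ *m _); apply: diag_ext => j hj _; rewrite (leq_trans hj hnm) expr2.
have hpow : (A^T *m A) ^+ q = V *m diag_rect n n (fun j => s j ^+ (2 * q)) *m V^T.
  rewrite hAtA pow_conj // diag_pow; congr (_ *m _ *m _).
  by apply: diag_ext => j _ _; rewrite exprM.
pose M := (A^T *m A) ^+ q *m A^T *m Phi.
have hM : M = V *m diag_rect n m (fun j => s j ^+ (2 * q + 1)) *m (U^T *m Phi).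
  rewrite /M hpow hAt !mulmxA -(mulmxA (V *m _) V^T V) hV mulmx1 -(mulmxA V) diag_mul.
  by congr (_ *m _ *m _ *m _); apply: diag_ext => j hj _; rewrite hj addn1 exprSr.
pose h := fun j : nat => if (j < n)%N then s j ^+ (2 * q + 2) else 0.
have hN : A *m M = U *m diag_rect m m h *m (U^T *m Phi).
  rewrite hM hSVD !mulmxA -(mulmxA (U *m _) V^T V) hV mulmx1 -(mulmxA U) diag_mul.
  congr (_ *m _ *m _ *m _); apply: diag_ext => j hj _; rewrite /h.
  by case: ifP => // _; rewrite -exprS addn1 addn2.
have [C hC] : exists C, M = Pbar *m C.
  case/andP: hPbar_range => _ /submxP [D hD].
  by exists D^T; rewrite -[M]trmxK /M hD trmx_mul trmxK.
split.
  rewrite /sin_angle.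
  have hcol : col i (lcols hkm U) = col (widen_ord hkm i) U.
    by apply/matrixP => a b; rewrite !(mxE, castmxE) /=; congr (U _ _); apply: val_inj.
  rewrite hcol.
  case: (hPiQ) => hQT hQI _.
  apply: (@part R m k U PiQ (widen_ord hkm i) (diag_rect m m h *m y) (s i ^+ (2*q+2))) => //.
  - by rewrite exprn_gt0.
  - apply: (proj_fix hPiQ).
    have -> : U *m (diag_rect m m h *m y) = Q *m (Rm *m C *m c0).
      by rewrite /y !mulmxA -hQR -(mulmxA A Pbar C) -hC hN !mulmxA.
    by rewrite trmx_mul submxMl.
  - by rewrite diag_mulv_sq hy_low // eqxx /h (ltn_trans hik hkn') mulr1.
  - by move=> j hj hjk; rewrite diag_mulv_sq hy_low // (negbTE hj) mulr0.
  - by rewrite mulr_ge0 // exprn_ge0.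
  - by rewrite mulr_ge0 ?exprn_ge0 // sqr_ge0.
  - have -> : (4 * q + 4 = (2 * q + 2) + (2 * q + 2))%N by rewrite addnACA -mulnDl.
    exact: gd_ineq.
  - have hsd : s i * delta = s k by rewrite /delta mulrC divfK // gt_eqF.
    rewrite mulrA -exprMn hsd.
    apply: le_trans (_ : \sum_(j < m | (k <= j)%N) (s k ^+ (2*q+2)) ^+ 2 * y j 0 ^+ 2 <= _).
      apply: ler_sum => j hj; rewrite diag_mulv_sq exprMn; apply: ler_wpM2r; first exact: sqr_ge0.
      have hh0 : 0 <= h j by rewrite /h; case: ifP => // hjn; rewrite exprn_ge0 // hs_nonneg.
      have hhk : h j <= s k ^+ (2 * q + 2).
        rewrite /h; case: ifP => hjn; last by rewrite exprn_ge0.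
        by apply: pow_le; [apply: hs_nonneg | apply: hmono].
      move: hh0 hhk; clear; nra.
    rewrite -mulr_sumr exprMn; apply: ler_wpM2l => //; exact: sqr_ge0.
rewrite /sin_angle.
have hcol : col i (lcols hkn V) = col (widen_ord hkn i) V.
  by apply/matrixP => a b; rewrite !(mxE, castmxE) /=; congr (V _ _); apply: val_inj.
rewrite hcol.
case: (hPiP) => hPT hPI _.
pose D' := diag_rect n m (fun j => s j ^+ (2 * q + 1)).
have hD'y : forall j : 'I_n, (D' *m y) j 0 = s j ^+ (2 * q + 1) * y (widen_ord hnm j) 0.
  by move=> j; rewrite /D' (diag_mulv hnm).
have hPtPt : Pt *m Pt^T = 1%:M := mulmx1C hPt_on.
apply: (@part R n k V PiP (widen_ord hkn i) (D' *m y) (s i ^+ (2*q+1))) => //.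
- by rewrite exprn_gt0.
- apply: (proj_fix hPiP).
  have -> : V *m (D' *m y) = Pbar *m Pt *m (Pt^T *m C *m c0).
    rewrite -!mulmxA (mulmxA Pt) hPtPt mul1mx /y !mulmxA -hC hM.
    by rewrite !mulmxA.
  by rewrite trmx_mul submxMl.
- rewrite hD'y hy_low; last exact: hik.
  by rewrite (_ : widen_ord hnm _ == _) ?mulr1 //; apply/eqP/val_inj.
- move=> j hj hjk; rewrite hD'y hy_low //.
  rewrite (_ : widen_ord hnm _ == _ = false) ?mulr0 //.
  by apply/negbTE; move: hj; apply: contra => /eqP e1; apply/eqP/val_inj; move: e1 => /(congr1 val).
- by rewrite mulr_ge0 // exprn_ge0.
- by rewrite mulr_ge0 ?exprn_ge0 // sqr_ge0.
- have -> : (4 * q + 2 = (2 * q + 1) + (2 * q + 1))%N by rewrite addnACA -mulnDl.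
  exact: gd_ineq.
- have hsd : s i * delta = s k by rewrite /delta mulrC divfK // gt_eqF.
  rewrite mulrA -exprMn hsd.
  apply: le_trans (_ : \sum_(j < n | (k <= j)%N) (s k ^+ (2*q+1)) ^+ 2 * y (widen_ord hnm j) 0 ^+ 2 <= _).
    apply: ler_sum => j hj; rewrite hD'y exprMn; apply: ler_wpM2r; first exact: sqr_ge0.
    have hh0 : 0 <= s j ^+ (2 * q + 1) by rewrite exprn_ge0 // hs_nonneg.
    have hhk : s j ^+ (2 * q + 1) <= s k ^+ (2 * q + 1).
      by apply: pow_le; [apply: hs_nonneg | apply: hmono].
    move: hh0 hhk; clear; nra.
  rewrite -mulr_sumr exprMn; apply: ler_wpM2l; first exact: sqr_ge0.
  apply: le_trans hy_sum.
  rewrite [X in _ <= X](bigID (fun j : 'I_m => (j < n)%N)) /=.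
  rewrite (@big_ord_narrow_cond _ _ _ n m _ _ hnm) /=.
  by rewrite lerDl; apply: sumr_ge0 => j _; apply: sqr_ge0.
Qed.
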